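(* Let $f:\mathbb P(V_F)\dashrightarrow\mathbb P(V_G)$ be a quadro-quadric Cremona transformation with inverse $g$. Let $E_f\subset R_f$ and $E_g\subset R_g$ be projective subspaces. The following are equivalent: \begin{enumerate} \item $E_f$ and $E_g$ are corresponding radical ideals for $f$ and $g$ respectively; \item $df(E_f)\subset E_g$ and $dg(E_g)\subset E_f$. \end{enumerate}
   Context: $V_F$ and $V_G$ are $n$-dimensional vector spaces. $F:V_F\to V_G$ and $G:V_G\to V_F$ are quadratic lifts of $f$ and $g$, with cubic forms $N,M$ such that $G(F(x))=N(x)x$ and $F(G(y))=M(y)y$. Put $j_f=F/N:V_F\dashrightarrow V_G$ and $j_g=G/M$. The radical of $f$ is $R_f=V(d^2N)\subset\mathbb P(V_F)$, and similarly $R_g=V(d^2M)$. For a projective subspace $A_f$ denote by $A_F$ its affine cone. A pair of projective subspaces $(I_f,I_g)$ is an ideal (and $I_f,I_g$ are called corresponding ideals) if, for generic $x\in V_F$ and $y\in V_G$, \[ j_f(x+I_F)-j_f(x)\subset I_G\quad\text{and}\quad j_g(y+I_G)-j_g(y)\subset I_F. \] It is radical if $I_f\subset R_f$ (equivalently $I_g\subset R_g$). For a projective subspace $E_f\subset\mathbb P(V_F)$, $df(E_f)$ is the projectivization of the span of $\{F(x+e)-F(x)-F(e): x\in V_F,\ e\in E_F\}$ (empty if this is $0$); $dg$ is defined similarly. *)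

(* Defs.v *)
From HB Require Import structures.
From mathcomp Require Import all_boot all_order all_algebra.
From mathcomp Require Import mpoly.
Set Implicit Arguments.
Unset Strict Implicit.
Unset Printing Implicit Defensive.
Import Order.TTheory GRing.Theory.
Local Open Scope ring_scope.

Section QuadroQuadric.
Variables (K : fieldType) (n : nat).

(* V_F = V_G = K^n, realised as row vectors 'rV[K]_n. *)
Notation V := 'rV[K]_n.

Definition ev (p : {mpoly K[n]}) (x : V) : K := p.@[fun i => x 0 i].

Definition evmap (F : 'I_n -> {mpoly K[n]}) (x : V) : V :=
  \row_i ev (F i) x.

(* F is a quadratic lift: homogeneous quadratic components without a common
   factor of positive degree *)
Definition quadratic_lift (F : 'I_n -> {mpoly K[n]}) : Prop :=
  (forall i, F i \is 2.-homog) /\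
  (forall (d : {mpoly K[n]}) (Q : 'I_n -> {mpoly K[n]}),
      (forall i, F i = d * Q i) -> (msize d <= 1)%N).

Definition cubic_form (N : {mpoly K[n]}) : Prop := N \is 3.-homog.

(* Data of a quadro-quadric Cremona transformation f with inverse g:
   quadratic lifts F, G and non-zero cubic forms N, M with
   G(F(x)) = N(x) x and F(G(y)) = M(y) y. *)
Definition quadro_quadric_cremona (F G : 'I_n -> {mpoly K[n]})
    (N M : {mpoly K[n]}) : Prop :=
  [/\ quadratic_lift F /\ quadratic_lift G,
      cubic_form N /\ N != 0, cubic_form M /\ M != 0,
      (forall x : V, evmap G (evmap F x) = ev N x *: x)
    & (forall y : V, evmap F (evmap G y) = ev M y *: y)].

(* j_f = F / N (only meaningful where N does not vanish) *)
Definition jmap (F : 'I_n -> {mpoly K[n]}) (N : {mpoly K[n]}) (x : V) : V :=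
  (ev N x)^-1 *: evmap F x.

(* a property holds for generic x : it holds on a non-empty Zariski open set *)
Definition generic (P : V -> Prop) : Prop :=
  exists Q : {mpoly K[n]}, Q != 0 /\ forall x : V, ev Q x != 0 -> P x.

Definition jmap_translate_in (F : 'I_n -> {mpoly K[n]}) (N : {mpoly K[n]})
    (IF IG : {vspace V}) (x : V) : Prop :=
  ev N x != 0 ->
  forall e : V, e \in IF -> ev N (x + e) != 0 ->
    jmap F N (x + e) - jmap F N x \in IG.

(* (I_f, I_g), given by their affine cones I_F, I_G, is an ideal *)
Definition is_ideal (F G : 'I_n -> {mpoly K[n]}) (N M : {mpoly K[n]})
    (IF IG : {vspace V}) : Prop :=
  generic (jmap_translate_in F N IF IG) /\
  generic (jmap_translate_in G M IG IF).

(* the radical R = V(d^2 N): points where all second partials of N vanish;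
   E is contained in R (as affine cones) *)
Definition in_radical (N : {mpoly K[n]}) (E : {vspace V}) : Prop :=
  forall e : V, e \in E -> forall i j : 'I_n, ev (mderiv i (mderiv j N)) e = 0.

Definition is_radical_ideal (F G : 'I_n -> {mpoly K[n]}) (N M : {mpoly K[n]})
    (IF IG : {vspace V}) : Prop :=
  is_ideal F G N M IF IG /\ in_radical N IF.

Definition in_span (S : V -> Prop) (v : V) : Prop :=
  forall U : {vspace V}, (forall w, S w -> w \in U) -> v \in U.

(* generators of (the affine cone of) df(E_f) *)
Definition dgen (F : 'I_n -> {mpoly K[n]}) (E : {vspace V}) (v : V) : Prop :=
  exists x e : V, e \in E /\
    v = evmap F (x + e) - evmap F x - evmap F e.

Definition d_sub (F : 'I_n -> {mpoly K[n]}) (E E' : {vspace V}) : Prop :=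
  forall v : V, in_span (dgen F E) v -> v \in E'.

End QuadroQuadric.

(* Main.v *)
Require Import Defs.
From HB Require Import structures.
From mathcomp Require Import all_boot all_order all_algebra.
From mathcomp Require Import mpoly.
From mathcomp Require Import ring lra zify.
Set Implicit Arguments.
Unset Strict Implicit.
Unset Printing Implicit Defensive.
Import Order.TTheory GRing.Theory.
Local Open Scope ring_scope.
Lemma digits (D : nat) : forall (k : nat) (a b : 'I_k -> nat),
  (forall i, a i < D)%N -> (forall i, b i < D)%N ->
  (\sum_(i < k) a i * D ^ i = \sum_(i < k) b i * D ^ i)%N -> forall i, a i = b i.
Proof.
elim=> [|k IH] a b ha hb; first by move=> _ [].
rewrite !big_ord_recl /= !expn0 !muln1.
under eq_bigr => i _ do rewrite /bump leq0n add1n expnS mulnCA.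
under [X in _ = (_ + X)%N -> _]eq_bigr => i _ do rewrite /bump leq0n add1n expnS mulnCA.
rewrite -!big_distrr /=.
set A := (\sum_(i < k) _)%N; set B := (\sum_(i < k) _)%N.
have ha0 := ha ord0; have hb0 := hb ord0.
set a0 := a ord0 in ha0 *; set b0 := b ord0 in hb0 *; move=> E.
have [e0 eAB] : a0 = b0 /\ A = B.
  have [lt|ge] := ltnP A B.
    exfalso; have : (D * A.+1 <= D * B)%N by rewrite leq_mul2l lt orbT.
    rewrite mulnS; lia.
  have [lt'|ge'] := ltnP B A.
    exfalso; have : (D * B.+1 <= D * A)%N by rewrite leq_mul2l lt' orbT.
    rewrite mulnS; lia.
  have AB : A = B by apply/eqP; rewrite eqn_leq ge ge'.
  by split=> //; move: E; rewrite AB => /addIn.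
move=> i; case: (unliftP ord0 i) => [j ->|->] //.
by apply: (IH (fun j => a (lift ord0 j)) (fun j => b (lift ord0 j))) => //.
Qed.

Section Aux.
Variables (K : fieldType) (n : nat).
Implicit Types (p q : {mpoly K[n]}) (x y e : 'rV[K]_n).

Lemma mderiv_homog d i p : p \is d.+1.-homog -> mderiv i p \is d.-homog.
Proof.
move=> /dhomogP hp; apply/dhomogP => m; rewrite mcoeff_msupp mcoeff_mderiv.
have [->|nz] := eqVneq p@_(m + U_(i)) 0; first by rewrite mul0rn eqxx.
move=> _; have := hp (m + U_(i))%MM; rewrite mcoeff_msupp nz => /(_ isT).
by change (mdeg (m + U_(i))%MM = d.+1 -> mdeg m = d); rewrite mdegD mdeg1 addn1 => -[].
Qed.

Lemma ev_homog0 p x y : p \is 0.-homog -> ev p x = ev p y.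
Proof.
move=> /dhomogP hp; rewrite /ev !mevalE; apply: eq_big_seq => m /hp.
move=> md; congr (_ * _); apply: eq_bigr => i _.
suff -> : m i = 0%N by rewrite !expr0.
by move: md; change (mdeg m = 0%N -> m i = 0%N); rewrite mdegE => /eqP; rewrite sum_nat_eq0 => /forallP /(_ i) /implyP /(_ isT) /eqP.
Qed.

Lemma mon_aux m i (v : 'I_n -> K) :
  v i * \prod_j v j ^+ (m - U_(i))%MM j * (m i)%:R = (m i)%:R * \prod_j v j ^+ m j.
Proof.
case: (posnP (m i)) => [->|mi]; first by rewrite !mulr0n mulr0 mul0r.
rewrite mulrC; congr (_ * _).
rewrite (bigD1 i) //= [in RHS](bigD1 i) //= mulrA -exprS mnmBE mnm1E eqxx subn1 prednK //.
congr (_ * _); apply: eq_bigr => j ji.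
by rewrite mnmBE mnm1E eq_sym (negbTE ji) subn0.
Qed.

Lemma ev_sum (I : Type) (r : seq I) (f : I -> {mpoly K[n]}) x :
  ev (\sum_(i <- r) f i) x = \sum_(i <- r) ev (f i) x.
Proof. by rewrite /ev; elim: r => [|a r IH]; rewrite ?big_nil ?big_cons ?meval0 // mevalD IH. Qed.

Lemma euler d p x : p \is d.-homog ->
  d%:R * ev p x = \sum_i x 0 i * ev (mderiv i p) x.
Proof.
move=> /dhomogP hp.
rewrite /mderiv {1}/ev mevalE big_distrr /=.
under [RHS]eq_bigr do rewrite ev_sum big_distrr /=.
rewrite exchange_big /=; apply: eq_big_seq => m /hp md.
rewrite [RHS](eq_bigr (fun i => p@_m * ((m i)%:R * \prod_j x 0 j ^+ m j))); last first.
  by move=> i _; rewrite /ev mevalZ mevalX -mon_aux; ring.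
have md2 : (\sum_i m i)%N = d by rewrite -mdegE; exact: md.
rewrite -big_distrr /= -big_distrl /= -natr_sum md2; ring.
Qed.

Lemma lin1 q x : q \is 1.-homog -> ev q x = \sum_k x 0 k * ev (mderiv k q) 0.
Proof.
move=> hq; rewrite -[ev q x]mul1r (euler x hq); apply: eq_bigr => k _.
by rewrite (ev_homog0 x 0 (mderiv_homog _ hq)).
Qed.

Lemma lin1D q x y : q \is 1.-homog -> ev q (x + y) = ev q x + ev q y.
Proof.
move=> hq; rewrite !(lin1 _ hq) -big_split; apply: eq_bigr => k _.
by rewrite mxE mulrDl.
Qed.

Lemma lin1Z q c x : q \is 1.-homog -> ev q (c *: x) = c * ev q x.
Proof.
move=> hq; rewrite !(lin1 _ hq) big_distrr; apply: eq_bigr => k _.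
by rewrite mxE -mulrA.
Qed.

Lemma symB p x e : (forall i, mderiv i p \is 1.-homog) ->
  \sum_i e 0 i * ev (mderiv i p) x = \sum_k x 0 k * ev (mderiv k p) e.
Proof.
move=> h.
under eq_bigr => i _ do rewrite (lin1 _ (h i)) big_distrr.
under [RHS]eq_bigr => i _ do rewrite (lin1 _ (h i)) big_distrr.
rewrite exchange_big /=; apply: eq_bigr => k _; apply: eq_bigr => i _.
by rewrite (mderiv_comm k i) mulrCA.
Qed.

Definition Bq p x e := \sum_k x 0 k * ev (mderiv k p) e.

Variable char0 : [pchar K] =i pred0.

Lemma natS_neq0 k : (k.+1)%:R != 0 :> K.
Proof. by move/pcharf0P: char0 => ->. Qed.

Lemma quad p x e : p \is 2.-homog -> ev p (x + e) = ev p x + Bq p x e + ev p e.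
Proof.
move=> hp; have h1 i : mderiv i p \is 1.-homog := mderiv_homog i hp.
apply: (mulfI (natS_neq0 1)).
rewrite (euler _ hp).
transitivity (\sum_i x 0 i * ev (mderiv i p) x + \sum_i e 0 i * ev (mderiv i p) e
  + \sum_i x 0 i * ev (mderiv i p) e + \sum_i e 0 i * ev (mderiv i p) x).
  rewrite -!big_split; apply: eq_bigr => i _; rewrite mxE (lin1D _ _ (h1 i)) /=; ring.
rewrite -(euler x hp) -(euler e hp) (symB x e h1) /Bq; ring.
Qed.

Lemma ev0_homog2 p : p \is 2.-homog -> ev p 0 = 0.
Proof.
move=> hp; apply: (mulfI (natS_neq0 1)); rewrite (euler _ hp) mulr0 big1 // => i _.
by rewrite mxE mul0r.
Qed.

Lemma Bq_diag p e : p \is 2.-homog -> Bq p e e = 2%:R * ev p e.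
Proof. by move=> hp; rewrite /Bq (euler _ hp). Qed.

Lemma BqN p x e : p \is 2.-homog -> Bq p x (- e) = - Bq p x e.
Proof.
move=> hp; rewrite /Bq -sumrN; apply: eq_bigr => k _.
by rewrite -scaleN1r (lin1Z _ _ (mderiv_homog k hp)); ring.
Qed.

Lemma evN_homog2 p e : p \is 2.-homog -> ev p (- e) = ev p e.
Proof.
move=> hp; have := quad e (- e) hp; rewrite subrr (ev0_homog2 hp) BqN // Bq_diag //.
move/eqP; rewrite eq_sym -subr_eq0; move/eqP => H; apply/eqP; rewrite -subr_eq0.
by rewrite -H; apply/eqP; ring.
Qed.

Lemma cubic N x e : N \is 3.-homog ->
  (forall i j, ev (mderiv i (mderiv j N)) e = 0) -> ev N (x + e) = ev N x.
Proof.
move=> hN hyp.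
have hG j : mderiv j N \is 2.-homog := mderiv_homog j hN.
have hH i j : mderiv i (mderiv j N) \is 1.-homog := mderiv_homog i (hG j).
have Gxe j : ev (mderiv j N) (x + e) = ev (mderiv j N) x.
  rewrite quad // /Bq big1 ?addr0; last by move=> k _; rewrite hyp mulr0.
  suff -> : ev (mderiv j N) e = 0 by rewrite addr0.
  apply: (mulfI (natS_neq0 1)); rewrite (euler _ (hG j)) mulr0 big1 // => i _.
  by rewrite hyp mulr0.
have Z : \sum_j e 0 j * ev (mderiv j N) x = 0.
  apply: (mulfI (natS_neq0 1)); rewrite mulr0 big_distrr /=.
  under eq_bigr => j _ do rewrite mulrCA (euler _ (hG j)) big_distrr /=.
  rewrite exchange_big /= big1 // => i _.
  under eq_bigr => j _ do rewrite mulrCA (mderiv_comm j i).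
  rewrite -big_distrr /= (symB x e (fun k => hH k i)) big1 ?mulr0 // => k _.
  by rewrite hyp mulr0.
apply: (mulfI (natS_neq0 2)); rewrite !(euler _ hN).
under eq_bigr => j _ do rewrite mxE Gxe mulrDl.
by rewrite big_split /= Z addr0.
Qed.

Lemma natr_inj i j : i%:R = j%:R :> K -> i = j.
Proof.
wlog le : i j / (i <= j)%N.
  move=> W E; case: (leqP i j) => h; first exact: W.
  by apply/esym/W => //; exact: ltnW.
move=> E.
have E2 : i%:R + 0 = i%:R + (j - i)%:R :> K by rewrite addr0 -natrD subnKC.
move/addrI: E2 => /eqP; rewrite eq_sym.
move/pcharf0P: char0 => -> /eqP; lia.
Qed.

Lemma nonroot (q : {poly K}) : q != 0 -> exists t, q.[t] != 0.
Proof.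
move=> qnz; set rs := [seq i%:R | i <- iota 0 (size q)] : seq K.
have [/hasP [t _ ht]|/hasPn h] := boolP (has (fun t => q.[t] != 0) rs).
  by exists t.
have allr : all (root q) rs by apply/allP => t /h; rewrite negbK.
have urs : uniq rs by rewrite map_inj_uniq ?iota_uniq //; exact: natr_inj.
by have := max_poly_roots qnz allr urs; rewrite size_map size_iota ltnn.
Qed.

Lemma exists_nonzero (P : {mpoly K[n]}) : P != 0 -> exists x : 'rV[K]_n, ev P x != 0.
Proof.
move=> Pnz.
set D := msize P.
pose enc (m : 'X_{1..n}) := (\sum_(i < n) m i * D ^ i)%N.
pose q : {poly K} := \sum_(m <- msupp P) P@_m *: 'X^(enc m).
have evq t : ev P (\row_i t ^+ (D ^ i)) = q.[t].
  rewrite /ev mevalE /q horner_sum; apply: eq_bigr => m _.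
  rewrite hornerZ hornerXn; congr (_ * _).
  under eq_bigr => i _ do rewrite mxE -exprM.
  by rewrite prodrXr; congr (_ ^+ _); apply: eq_bigr => i _; rewrite mulnC.
have lt m i : m \in msupp P -> (m i < D)%N.
  move=> mP; apply: leq_ltn_trans (msize_mdeg_lt mP).
  change (m i <= mdeg m)%N; rewrite mdegE (bigD1 i) //=; exact: leq_addr.
have qnz : q != 0.
  have : msupp P != [::] by rewrite msupp_eq0.
  case E: (msupp P) => [|m0 s] // _.
  have m0P : m0 \in msupp P by rewrite E mem_head.
  apply/eqP => /(congr1 (fun r : {poly K} => r`_(enc m0))).
  rewrite coef0 /q coef_sum (bigD1_seq m0) ?msupp_uniq //= coefZ coefXn eqxx mulr1 big1_seq.
    by rewrite addr0 => h; move: m0P; rewrite mcoeff_msupp h eqxx.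
  move=> m /andP [ne mP]; rewrite coefZ coefXn; case: eqP => [e|]; last by rewrite mulr0.
  exfalso; move/negP: ne; apply; apply/eqP/mnmP => i.
  by apply: (digits (a := fun i => m i) (b := fun i => m0 i)) (esym e) i => j; apply: lt.
have [t qt] := nonroot qnz.
by exists (\row_i t ^+ (D ^ i)); rewrite evq.
Qed.

Lemma density (P : {mpoly K[n]}) (L : 'rV[K]_n -> 'rV[K]_n) (U : {vspace 'rV[K]_n}) :
  P != 0 -> (forall x y, L (x + y) = L x + L y) ->
  (forall y, ev P y != 0 -> L y \in U) -> forall x, L x \in U.
Proof.
move=> Pnz Ladd hL x.
pose tq := [tuple ('X_i + (x 0 i)%:MP : {mpoly K[n]}) | i < n].
pose Pt := P \mPo tq.
have evPt y : ev Pt y = ev P (y + x).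
  rewrite /ev comp_mpoly_meval; apply: meval_eq => i.
  by rewrite tnth_mktuple mevalD mevalXU mevalC mxE.
have Ptnz : Pt != 0.
  have [a Pa] := exists_nonzero Pnz.
  apply/eqP => Pt0; move: Pa; rewrite -[a](subrK x) -evPt Pt0 /ev meval0 eqxx.
  by [].
have [y Py] := exists_nonzero (mulf_neq0 Pnz Ptnz).
move: Py; rewrite /ev mevalM mulf_eq0 negb_or => /andP [h1 h2].
have h2' : ev P (y + x) != 0 by rewrite -evPt.
have := memvB (hL _ h2') (hL _ h1).
by rewrite Ladd addrAC subrr add0r.
Qed.

Definition BF (F : 'I_n -> {mpoly K[n]}) x e : 'rV[K]_n := \row_i Bq (F i) x e.

Lemma evmapQ F x e : (forall i, F i \is 2.-homog) ->
  evmap F (x + e) = evmap F x + BF F x e + evmap F e.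
Proof. by move=> hF; apply/rowP => i; rewrite !mxE quad. Qed.

Lemma evmapQ' F x e : (forall i, F i \is 2.-homog) ->
  evmap F (x + e) - evmap F x - evmap F e = BF F x e.
Proof. by move=> hF; rewrite evmapQ // addrAC addrK addrC addKr. Qed.

Lemma BF_add F x y e : BF F (x + y) e = BF F x e + BF F y e.
Proof.
apply/rowP => i; rewrite !mxE /Bq -big_split; apply: eq_bigr => k _.
by rewrite mxE mulrDl.
Qed.

Lemma BF_N F x e : (forall i, F i \is 2.-homog) -> BF F x (- e) = - BF F x e.
Proof. by move=> hF; apply/rowP => i; rewrite !mxE BqN. Qed.

Lemma BF_diag F e : (forall i, F i \is 2.-homog) -> BF F e e = 2%:R *: evmap F e.
Proof. by move=> hF; apply/rowP => i; rewrite !mxE Bq_diag. Qed.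

Lemma evmapN F e : (forall i, F i \is 2.-homog) -> evmap F (- e) = evmap F e.
Proof. by move=> hF; apply/rowP => i; rewrite !mxE evN_homog2. Qed.

Lemma sub3 (a b c : 'rV[K]_n) : a + b + c - a = b + c.
Proof. by rewrite [a + b]addrC addrAC addrK. Qed.

Lemma ideal_half F N (EF EG : {vspace 'rV[K]_n}) : (forall i, F i \is 2.-homog) ->
  N \is 3.-homog -> in_radical N EF -> d_sub F EF EG ->
  generic (jmap_translate_in F N EF EG).
Proof.
move=> hF hN hR hd; exists 1; split; first exact: oner_neq0.
move=> x _ Nx e eE Nxe.
have NN : ev N (x + e) = ev N x := cubic x hN (hR e eE).
have inG w : dgen F EF w -> w \in EG by move=> hw; apply: hd => U hU; exact: hU.
have hB : BF F x e \in EG by apply: inG; exists x, e; split => //; rewrite evmapQ'.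
have hFe : evmap F e \in EG.
  have : BF F e e \in EG by apply: inG; exists e, e; split => //; rewrite evmapQ'.
  rewrite BF_diag // => h; have := memvZ (2%:R^-1) h.
  by rewrite scalerA mulVf ?natS_neq0 // scale1r.
rewrite /jmap NN -scalerBr; apply: memvZ.
by rewrite evmapQ // sub3 memvD.
Qed.

Lemma dsub_half F N (EF EG : {vspace 'rV[K]_n}) : (forall i, F i \is 2.-homog) ->
  N \is 3.-homog -> N != 0 -> in_radical N EF ->
  generic (jmap_translate_in F N EF EG) -> d_sub F EF EG.
Proof.
move=> hF hN Nnz hR [Q [Qnz HQ]] v hv; apply: hv => w [x [e [eE ->]]].
rewrite evmapQ' //.
have key y e' : ev (Q * N) y != 0 -> e' \in EF -> BF F y e' + evmap F e' \in EG.
  move=> h eE'; move: h; rewrite /ev mevalM mulf_eq0 negb_or => /andP [Qy Ny].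
  have NN : ev N (y + e') = ev N y := cubic y hN (hR e' eE').
  have := HQ y Qy Ny e' eE'; rewrite NN => /(_ Ny).
  rewrite /jmap NN -scalerBr evmapQ // sub3 => h.
  by have := memvZ (ev N y) h; rewrite scalerA mulfV // scale1r.
apply: (density (P := Q * N) (L := fun y => BF F y e)) => //.
- exact: mulf_neq0.
- by move=> x1 y1; exact: BF_add.
- move=> y hy; have h1 := key y e hy eE.
  have eN : - e \in EF by rewrite memvN.
  have h2 := key y (- e) hy eN.
  rewrite BF_N // evmapN // in h2.
  have := memvZ (2%:R^-1) (memvB h1 h2).
  have -> : BF F y e + evmap F e - (- BF F y e + evmap F e) = 2%:R *: BF F y e.
    by rewrite opprD opprK addrACA subrr addr0 scaler_nat mulr2n.
  by rewrite scalerA mulVf ?natS_neq0 // scale1r.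
Qed.
End Aux.

Theorem proposition5p12 (K : closedFieldType) (n : nat)
    (F G : 'I_n -> {mpoly K[n]}) (N M : {mpoly K[n]})
    (EF EG : {vspace 'rV[K]_n}) :
  [pchar K] =i pred0 ->
  quadro_quadric_cremona F G N M ->
  in_radical N EF -> in_radical M EG ->
  (is_radical_ideal F G N M EF EG <-> (d_sub F EF EG /\ d_sub G EG EF)).
Proof.
move=> char0 [[[hF _] [hG _]] [hN Nnz] [hM Mnz] _ _] hRN hRM; split.
  move=> [[h1 h2] _]; split.
    exact: (dsub_half char0 hF hN Nnz hRN h1).
  exact: (dsub_half char0 hG hM Mnz hRM h2).
move=> [d1 d2]; split => //; split.
  exact: (ideal_half char0 hF hN hRN d1).
exact: (ideal_half char0 hG hM hRM d2).
Qed.
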